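(* Let $\mathcal{H}$ be a complex Hilbert space and let $T\in\mathcal{B}(\mathcal{H})$ be a $\Delta_T$-regular concave operator. If $T$ is $\Delta_{T^2}$-regular, then $T$ is completely hyperexpansive. In particular, if $\Delta_T$ has rank one, then $T$ is $\Delta_{T^2}$-regular.
   Context: For an operator $A$, $\Delta_A=A^*A-I$. $T$ is concave if $T^{*2}T^2-2T^*T+I\le0$. For a positive operator $A$, $T$ is $A$-regular if $AT=A^{1/2}TA^{1/2}$. $T$ is completely hyperexpansive if $\sum_{j=0}^n(-1)^j\binom{n}{j}T^{*j}T^j\le0$ for all $n\ge1$. *)

(* Defs.v *)
From mathcomp Require Import all_boot all_order all_algebra.
From mathcomp Require Import reals.
From mathcomp.real_closed Require Import complex.
Set Implicit Arguments. Unset Strict Implicit. Unset Printing Implicit Defensive.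
Import Order.TTheory GRing.Theory Num.Theory.
Local Open Scope ring_scope.

Section Hilbert.
Variables (R : realType) (V : lmodType R[i]) (ip : V -> V -> R[i]).

Definition is_hilbert : Prop :=
  [/\ (forall (a : R[i]) x y z, ip (a *: x + y) z = a * ip x z + ip y z),
      (forall x y, ip y x = (ip x y)^*),
      (forall x, 0 <= ip x x),
      (forall x, ip x x = 0 -> x = 0) &
      (forall u : nat -> V,
         (forall e : R[i], 0 < e -> exists N, forall m n, (N <= m)%N -> (N <= n)%N ->
            ip (u m - u n) (u m - u n) < e) ->
         exists l : V, forall e : R[i], 0 < e -> exists N, forall n, (N <= n)%N ->
            ip (u n - l) (u n - l) < e)].

Definition bounded_op (T : V -> V) : Prop :=
  (forall (a : R[i]) x y, T (a *: x + y) = a *: T x + T y) /\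
  exists M : R[i], forall x, ip (T x) (T x) <= M * ip x x.

Definition is_adjoint (T Tadj : V -> V) : Prop :=
  forall x y, ip (T x) y = ip x (Tadj y).

Definition op_ge0 (A : V -> V) : Prop := forall x, 0 <= ip (A x) x.
Definition op_le0 (A : V -> V) : Prop := forall x, ip (A x) x <= 0.

Definition Delta (A Aadj : V -> V) : V -> V := fun x => Aadj (A x) - x.

Definition concave (T Tadj : V -> V) : Prop :=
  op_le0 (fun x => Tadj (Tadj (T (T x))) - 2%:R *: Tadj (T x) + x).

Definition is_sqrt (A S : V -> V) : Prop :=
  [/\ bounded_op S, op_ge0 S & forall x, S (S x) = A x].

Definition regular (A S T : V -> V) : Prop :=
  forall x, A (T x) = S (T (S x)).

Definition compl_hyperexpansive (T Tadj : V -> V) : Prop :=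
  forall n : nat, (1 <= n)%N ->
    op_le0 (fun x => \sum_(j < n.+1)
              (((-1) ^+ j * ('C(n, j))%:R) : R[i]) *: iter j Tadj (iter j T x)).

Definition rank_one (A : V -> V) : Prop :=
  exists e : V, [/\ e != 0, (forall x, exists c : R[i], A x = c *: e)
                  & exists x, A x != 0].

End Hilbert.

(* Main.v *)
Require Import Defs.
From mathcomp Require Import all_boot all_order all_algebra.
From mathcomp Require Import reals.
From mathcomp.real_closed Require Import complex.
From mathcomp Require Import classical_sets boolp.
From mathcomp Require Import ring lra.
Import Order.TTheory GRing.Theory Num.Theory.
Local Open Scope ring_scope.
Set Implicit Arguments. Unset Strict Implicit. Unset Printing Implicit Defensive.

Section Basic.
Variables (R : realType) (V : lmodType R[i]) (ip : V -> V -> R[i]).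
Hypothesis ipl : forall (a : R[i]) x y z, ip (a *: x + y) z = a * ip x z + ip y z.
Hypothesis ipc : forall x y, ip y x = (ip x y)^*.
Hypothesis ipp : forall x, 0 <= ip x x.
Hypothesis ipd : forall x, ip x x = 0 -> x = 0.

Lemma ip0l z : ip 0 z = 0.
Proof. have h := ipl 1 0 0 z; rewrite scaler0 addr0 mul1r in h.
by apply/(addrI (ip 0 z)); rewrite addr0 -h. Qed.
Lemma ipDl x y z : ip (x + y) z = ip x z + ip y z.
Proof. by have := ipl 1 x y z; rewrite scale1r mul1r. Qed.
Lemma ipZl a x z : ip (a *: x) z = a * ip x z.
Proof. by have := ipl a x 0 z; rewrite addr0 ip0l addr0. Qed.
Lemma ipNl x z : ip (- x) z = - ip x z.
Proof. by rewrite -scaleN1r ipZl mulN1r. Qed.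
Lemma ipBl x y z : ip (x - y) z = ip x z - ip y z.
Proof. by rewrite ipDl ipNl. Qed.
Lemma ip0r z : ip z 0 = 0.
Proof. by rewrite ipc ip0l conjC0. Qed.
Lemma ipDr x y z : ip z (x + y) = ip z x + ip z y.
Proof. by rewrite !(ipc _ z) ipDl rmorphD. Qed.
Lemma ipZr a x z : ip z (a *: x) = a^* * ip z x.
Proof. by rewrite !(ipc _ z) ipZl rmorphM. Qed.
Lemma ipNr x z : ip z (- x) = - ip z x.
Proof. by rewrite !(ipc _ z) ipNl rmorphN. Qed.
Lemma ipBr x y z : ip z (x - y) = ip z x - ip z y.
Proof. by rewrite ipDr ipNr. Qed.
Lemma ip_real x : ip x x \is Num.real.
Proof. exact: ger0_real. Qed.
Lemma ip_ext u w : (forall v, ip u v = ip w v) -> u = w.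
Proof. move=> h; apply/eqP; rewrite -subr_eq0; apply/eqP/ipd; by rewrite ipBl h subrr. Qed.
Lemma ip_ext_r u w : (forall v, ip v u = ip v w) -> u = w.
Proof. move=> h; apply: ip_ext => v; by rewrite ipc h -ipc. Qed.
Lemma ip_conj_self x : (ip x x)^* = ip x x.
Proof. by rewrite -ipc. Qed.

Definition linop (f : V -> V) := forall (a : R[i]) x y, f (a *: x + y) = a *: f x + f y.
Section Lin.
Variable f : V -> V.
Hypothesis hf : linop f.
Lemma lin0 : f 0 = 0.
Proof. have h := hf 1 0 0; rewrite scaler0 addr0 scale1r in h.
by apply/(addrI (f 0)); rewrite addr0 -h. Qed.
Lemma linD x y : f (x + y) = f x + f y.
Proof. by have := hf 1 x y; rewrite !scale1r. Qed.
Lemma linZ a x : f (a *: x) = a *: f x.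
Proof. by have := hf a x 0; rewrite !addr0 lin0 addr0. Qed.
Lemma linN x : f (- x) = - f x.
Proof. by rewrite -scaleN1r linZ scaleN1r. Qed.
Lemma linB x y : f (x - y) = f x - f y.
Proof. by rewrite linD linN. Qed.
End Lin.

Lemma adj_lin T Tadj : (forall x y, ip (T x) y = ip x (Tadj y)) -> linop Tadj.
Proof.
move=> h a x y; apply: ip_ext_r => v.
by rewrite -h ipDr ipZr !h ipDr ipZr.
Qed.

Lemma adj_sym T Tadj : (forall x y, ip (T x) y = ip x (Tadj y)) ->
  forall x y, ip (Tadj x) y = ip x (T y).
Proof. by move=> h x y; rewrite ipc -h -ipc. Qed.

(* polarization: positive operators are self-adjoint *)
Lemma pos_selfadj S : linop S -> (forall x, 0 <= ip (S x) x) ->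
  forall x y, ip (S x) y = ip x (S y).
Proof.
move=> hS hp.
have hr z : ip (S z) z = ip z (S z).
  by rewrite [RHS]ipc; apply/esym/CrealP/ger0_real.
pose a := fun x y => ip (S x) y - ip x (S y).
have a0 z : a z z = 0 by rewrite /a hr subrr.
have aDl x y z : a (x + y) z = a x z + a y z.
  by rewrite /a (linD hS) !ipDl addrACA opprD.
have aDr x y z : a z (x + y) = a z x + a z y.
  by rewrite /a (linD hS) !ipDr addrACA opprD.
have aZl c x z : a (c *: x) z = c * a x z.
  by rewrite /a (linZ hS) !ipZl mulrBr.
have aZr c x z : a x (c *: z) = c^* * a x z.
  by rewrite /a (linZ hS) !ipZr mulrBr.
have h1 x y : a x y + a y x = 0.
  by have := a0 (x + y); rewrite aDl !aDr !a0 add0r addr0.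
have h2 x y : a x y = a y x.
  have := a0 (x + 'i *: y); rewrite aDl !aDr !a0 add0r addr0 aZl aZr.
  rewrite conjCi mulNr addrC => /eqP; rewrite subr_eq0 => /eqP h.
  by apply: (mulfI (neq0Ci R[i])); rewrite h.
move=> x y; apply/eqP; rewrite -subr_eq0; apply/eqP.
have := h1 x y; rewrite -h2 -mulr2n => /eqP; rewrite mulrn_eq0 /= => /eqP.
by move=> H; rewrite -/(a x y) h2.
Qed.
End Basic.

Section Arith.
Variable R : realFieldType.
Lemma ar_cauchy (a b c r s em en d : R) : s = a + b - 2 * r -> 2 * 2 * c = a + b + 2 * r ->
  a < d + em -> b < d + en -> d <= c -> s <= 2 * em + 2 * en.
Proof. move=> *; lra. Qed.
Lemma ar_hc (s a b c eps : R) : s <= 2 * a + 2 * b -> a <= c -> b <= c -> c < eps / 4%:R ->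
  eps / 4%:R * 4%:R = eps -> s < eps.
Proof. move=> h1 h2 h3 h4 h5. rewrite -h5. lra. Qed.
Lemma ar_aux (X na nb r eps d : R) : X = na + nb + 2 * r ->
  0 <= eps ^+ 2 * na + nb - 2 * (eps * r) -> na < d + eps -> nb < eps ^+ 2 ->
  0 < eps -> eps <= 1 -> 0 <= d -> 0 <= na -> 0 <= nb -> X <= d + eps * (d + 4%:R).
Proof.
move=> hX key ha hb e0 e1 d0 na0 nb0.
have h1 : eps * X <= eps * na + eps * nb + eps ^+ 2 * na + nb.
  rewrite hX; lra.
have A : eps * na <= eps * (d + eps) by rewrite ler_pM2l //; lra.
have B : eps ^+ 2 * na <= eps ^+ 2 * (d + eps) by rewrite ler_pM2l ?exprn_gt0 //; lra.
have e2 : eps ^+ 2 <= eps by rewrite expr2 ler_piMl // ltW.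
have C : eps * nb <= eps * eps ^+ 2 by rewrite ler_pM2l //; lra.
have C2 : eps * eps ^+ 2 <= eps ^+ 2 by rewrite ler_piMl // ?exprn_ge0 // ltW.
have e3 : eps ^+ 2 * eps <= eps ^+ 2 by rewrite ler_piMr // ?exprn_ge0 // ltW.
have h2 : eps * X <= eps * (d + eps * (d + 4%:R)).
  have E1 : eps ^+ 2 * (d + eps) = eps ^+ 2 * d + eps ^+ 2 * eps by ring.
  have E2 : eps * (d + eps) = eps * d + eps ^+ 2 by rewrite expr2; ring.
  have E3 : eps * (d + eps * (d + 4%:R)) = eps * d + eps ^+ 2 * d + 4%:R * eps ^+ 2 by rewrite expr2; ring.
  rewrite E3; rewrite E1 in B; rewrite E2 in A; lra.
by rewrite -(ler_pM2l e0).
Qed.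
Lemma ar_orth (r nk : R) : (forall s, 2 * s * r <= s ^+ 2 * nk) -> 0 <= nk -> r = 0.
Proof.
move=> hs nk0.
pose t := (nk + 1)^-1.
have t0 : 0 < t by rewrite invr_gt0; lra.
have tt : t * (nk + 1) = 1 by rewrite mulVf //; lra.
have h := hs (r * t).
have h' : r ^+ 2 * t * (1 + t) <= 0.
  have e : (r * t) ^+ 2 * nk = r ^+ 2 * t * (t * nk) by rewrite exprMn !expr2; ring.
  have e2 : t * nk = 1 - t by lra.
  rewrite e e2 in h. nra.
have : 0 < t * (1 + t) by nra.
move=> p; have : r ^+ 2 <= 0 by nra.
move=> h''; apply/eqP; rewrite -sqrf_eq0; apply/eqP; apply: le_anti; rewrite h'' sqr_ge0 //.
Qed.
Lemma ar_min (X d : R) : 0 <= d ->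
  (forall eps, 0 < eps -> eps <= 1 -> X <= d + eps * (d + 4%:R)) -> X <= d.
Proof.
move=> d0 aux; apply/ler_addgt0Pr => eta he.
pose eps := Num.min 1 (eta / (d + 4%:R)).
have hd4 : 0 < d + 4%:R by lra.
have he0 : 0 < eps by rewrite lt_min ltr01 divr_gt0.
have he1 : eps <= 1 by rewrite ge_min lexx.
have he2 : eps * (d + 4%:R) <= eta.
  by rewrite -ler_pdivlMr // ge_min lexx orbT.
have := aux eps he0 he1; lra.
Qed.
End Arith.

Lemma pascal (F : comRingType) (a : nat -> F) n :
  \sum_(k < n.+2) ((-1) ^+ k * ('C(n.+1, k))%:R) * a k =
  \sum_(k < n.+1) ((-1) ^+ k * ('C(n, k))%:R) * (a k - a k.+1).
Proof.
rewrite big_ord_recl /= bin0 expr0 mul1r.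
under eq_bigr => i _ do rewrite /bump /= add1n binS natrD mulrDr mulrDl.
rewrite big_split /= mul1r.
rewrite [X in _ + (X + _)]big_ord_recr /= bin_small // mulr0n mulr0 mul0r addr0.
under [X in _ + (_ + X)]eq_bigr => i _ do rewrite exprS !mulN1r !mulNr.
rewrite sumrN.
under [RHS]eq_bigr => i _ do rewrite mulrBr.
rewrite sumrB [X in _ = X - _]big_ord_recl /= bin0 expr0 mul1r.
rewrite addrA; congr (_ + _ - _).
by rewrite mul1r.
Qed.


Section Proj.
Variables (R : realType) (V : lmodType R[i]) (ip : V -> V -> R[i]).
Hypothesis ipl : forall (a : R[i]) x y z, ip (a *: x + y) z = a * ip x z + ip y z.
Hypothesis ipc : forall x y, ip y x = (ip x y)^*.
Hypothesis ipp : forall x, 0 <= ip x x.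
Hypothesis ipd : forall x, ip x x = 0 -> x = 0.
Hypothesis ipcomp : forall u : nat -> V,
         (forall e : R[i], 0 < e -> exists N, forall m n, (N <= m)%N -> (N <= n)%N ->
            ip (u m - u n) (u m - u n) < e) ->
         exists l : V, forall e : R[i], 0 < e -> exists N, forall n, (N <= n)%N ->
            ip (u n - l) (u n - l) < e.

Local Notation "x %:CC" := (real_complex R x) (at level 2, format "x %:CC").

Definition nr v := complex.Re (ip v v).
Definition rr u v := complex.Re (ip u v).

Lemma nrE v : (nr v)%:CC = ip v v.
Proof. by rewrite /nr RRe_real // (ip_real ipp). Qed.
Lemma rrE u v : (rr u v)%:CC = 'Re (ip u v).
Proof. by rewrite /rr complexRe. Qed.
Lemma nr_ge0 v : 0 <= nr v.
Proof. by rewrite -lecR nrE. Qed.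

Lemma nrD u v : nr (u + v) = nr u + nr v + 2 * rr u v.
Proof.
apply: complexI; rewrite !rmorphD rmorphM /= rmorph_nat !nrE rrE.
rewrite ReE (ipDl ipl) !(ipDr ipl ipc) (ipc u v).
have h2 : (2%:R : R[i]) != 0 by rewrite pnatr_eq0.
rewrite mulrC divfK //; rewrite -!addrA; congr (_ + _).
by rewrite addrA addrC.
Qed.

Lemma RC_real (c : R) : c%:CC \is Num.real.
Proof. by apply/complex_realP; exists c. Qed.
Lemma RC_conj (c : R) : (c%:CC)^* = c%:CC.
Proof. exact/CrealP/RC_real. Qed.

Lemma RCN1 : (-1 : R)%:CC = -1.
Proof. exact: rmorphN1. Qed.

Lemma nrZ (c : R) v : nr (c%:CC *: v) = c ^+ 2 * nr v.
Proof.
apply: complexI; rewrite rmorphM rmorphXn /= !nrE (ipZl ipl) (ipZr ipl ipc).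
by rewrite RC_conj mulrA expr2.
Qed.
Lemma nrN v : nr (- v) = nr v.
Proof. by rewrite -scaleN1r -RCN1 nrZ sqrrN expr1n mul1r. Qed.
Lemma rrC u v : rr v u = rr u v.
Proof. by apply: complexI; rewrite !rrE (ipc u v) Re_conj. Qed.
Lemma rrZr (c : R) u v : rr u (c%:CC *: v) = c * rr u v.
Proof.
rewrite /rr (ipZr ipl ipc) RC_conj; case: (ip u v) => a b /=.
by rewrite mul0r subr0.
Qed.
Lemma rrZl (c : R) u v : rr (c%:CC *: u) v = c * rr u v.
Proof. by rewrite rrC rrZr rrC. Qed.
Lemma rrNr u v : rr u (- v) = - rr u v.
Proof. by rewrite -scaleN1r -RCN1 rrZr mulN1r. Qed.
Lemma nrB u v : nr (u - v) = nr u + nr v - 2 * rr u v.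
Proof. by rewrite nrD nrN rrNr mulrN. Qed.

Lemma ltC_real (e : R[i]) : 0 < e -> e = (complex.Re e)%:CC /\ 0 < complex.Re e.
Proof.
move=> he; have er : e = (complex.Re e)%:CC by rewrite RRe_real // gtr0_real.
by split=> //; rewrite -ltcR -er.
Qed.

Lemma inv_le (N m : nat) : (N <= m)%N -> (m.+1%:R : R)^-1 <= (N.+1%:R)^-1.
Proof.
move=> hNm; rewrite lef_pV2 ?posrE ?ltr0Sn // ler_nat; by [].
Qed.

Section Projection.
Variable K : V -> Prop.
Hypothesis K0 : K 0.
Hypothesis KD : forall x y, K x -> K y -> K (x + y).
Hypothesis KZ : forall (a : R[i]) x, K x -> K (a *: x).
Hypothesis Kcl : forall (u : nat -> V) l, (forall n, K (u n)) ->
  (forall e : R[i], 0 < e -> exists N, forall n, (N <= n)%N -> ip (u n - l) (u n - l) < e) ->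
  K l.

Lemma proj_exists x : exists k, K k /\ forall k', K k' -> ip (x - k) k' = 0.
Proof.
pose E : set R := fun r => exists k, K k /\ r = nr (x - k).
have E0 : E (nr (x - 0)) by exists 0.
have hlb : has_lbound E by exists 0 => r [k [_ ->]]; exact: nr_ge0.
have hinf : has_inf E by split => //; exists (nr (x - 0)).
pose d := inf E.
have dlb k : K k -> d <= nr (x - k).
  by move=> Kk; apply: (ge_inf hlb); exists k.
have d0 : 0 <= d.
  by apply: lb_le_inf; [exists (nr (x - 0)) | move=> r [k [_ ->]]; exact: nr_ge0].
have near n : exists k, K k /\ nr (x - k) < d + n.+1%:R^-1.
  have [r [k [Kk ->]] hr] := inf_adherent (eps := (n.+1%:R^-1 : R)) (ltac:(by rewrite invr_gt0 ltr0Sn)) hinf.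
  by exists k.
have [kk hk] := choice near.
have Kkk n : K (kk n) by case: (hk n).
have cauchy m n : nr (kk m - kk n) <= 2 * (m.+1%:R^-1 : R) + 2 * (n.+1%:R^-1 : R).
  pose mid := (2%:R^-1 : R[i]) *: (kk m + kk n).
  have Kmid : K mid by apply: KZ; apply: KD.
  have eq1 : (x - kk m) + (x - kk n) = (2 : R)%:CC *: (x - mid).
    rewrite rmorph_nat scalerBr scalerA mulfV ?pnatr_eq0 // scale1r scaler_nat mulr2n.
    by rewrite opprD !addrA; congr (_ - _); rewrite addrAC.
  have eq2 : (x - kk m) - (x - kk n) = - (kk m - kk n).
    by rewrite opprB addrC !addrA subrK opprB.
  have := nrD (x - kk m) (x - kk n); have := nrB (x - kk m) (x - kk n).
  rewrite eq1 eq2 nrN nrZ => h1 h2.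
  have hmid : d <= nr (x - mid) := dlb _ Kmid.
  have hm : nr (x - kk m) < d + (m.+1%:R^-1 : R) by case: (hk m).
  have hn : nr (x - kk n) < d + (n.+1%:R^-1 : R) by case: (hk n).
  rewrite expr2 in h2; exact: ar_cauchy h1 h2 hm hn hmid.
have hc : forall e : R[i], 0 < e -> exists N, forall m n, (N <= m)%N -> (N <= n)%N ->
            ip (kk m - kk n) (kk m - kk n) < e.
  move=> e /ltC_real [-> he]; set eps := complex.Re e.
  have [N hN] := ltr_add_invr (ltac:(by rewrite divr_gt0 // ltr0n) : 0 < eps / 4%:R).
  rewrite add0r in hN.
  exists N => m n hm hn; rewrite -nrE ltcR.
  have h4 : eps / 4%:R * 4%:R = eps by rewrite divfK // pnatr_eq0.
  exact: ar_hc (cauchy m n) (inv_le hm) (inv_le hn) hN h4.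
have [l hl] := ipcomp hc.
have Kl : K l by apply: (Kcl Kkk hl).
have conv eps : 0 < eps -> exists N, forall n, (N <= n)%N -> nr (kk n - l) < eps.
  move=> he; have [N hN] := hl (eps%:CC) (ltac:(by rewrite ltcR)).
  by exists N => n hn; rewrite -ltcR nrE; apply: hN.
have aux eps : 0 < eps -> eps <= 1 -> nr (x - l) <= d + eps * (d + 4%:R).
  move=> he he1.
  have [N1 hN1] := ltr_add_invr he; rewrite add0r in hN1.
  have [N2 hN2] := conv (eps ^+ 2) (ltac:(by rewrite exprn_gt0)).
  pose n := maxn N1 N2.
  have hb := hN2 n (leq_maxr _ _).
  have hn1 : n.+1%:R^-1 < eps by apply: le_lt_trans (inv_le (leq_maxl N1 N2)) hN1.
  case: (hk n) => _ ha.
  set a := x - kk n; set b := kk n - l.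
  have eab : a + b = x - l by rewrite /a /b addrA subrK.
  have key := nr_ge0 (eps%:CC *: a - b).
  rewrite nrB nrZ rrZl in key.
  have hs := nrD a b; rewrite eab in hs.
  have ha' : nr a < d + eps by apply: lt_le_trans ha _; rewrite lerD2l ltW.
  exact: ar_aux hs key ha' hb he he1 d0 (nr_ge0 a) (nr_ge0 b).
have minl : nr (x - l) <= d by apply: ar_min d0 aux.
exists l; split => // k' Kk'.
set w := x - l.
have hre : forall k'', K k'' -> rr w k'' = 0.
  move=> k'' Kk''.
  have hs s : 2 * s * rr w k'' <= s ^+ 2 * nr k''.
    have Kls : K (l + s%:CC *: k'') by apply: KD => //; apply: KZ.
    have := dlb _ Kls.
    have -> : x - (l + s%:CC *: k'') = w - s%:CC *: k'' by rewrite /w opprD addrA.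
    rewrite nrB nrZ rrZr; lra.
  exact: ar_orth hs (nr_ge0 k'').
have h1 := hre k' Kk'.
have h2 := hre ('i *: k') (KZ 'i Kk').
have : 'Re (ip w k') = 0 by rewrite -rrE h1.
have : 'Im (ip w k') = 0.
  have := congr1 (fun r => r%:CC) h2; rewrite rrE (ipZr ipl ipc) conjCi mulNr.
  have ReN z : 'Re (- z) = - 'Re z by rewrite !ReE rmorphN -opprD mulNr.
  by rewrite ReN ReMil opprK rmorph0.
move=> hi hr; by rewrite [ip w k']Crect hi hr mulr0 addr0.
Qed.
End Projection.
End Proj.

Unset Implicit Arguments.


Section Main.
Variables (R : realType) (V : lmodType R[i]) (ip : V -> V -> R[i]).
Hypothesis ipl : forall (a : R[i]) x y z, ip (a *: x + y) z = a * ip x z + ip y z.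
Hypothesis ipc : forall x y, ip y x = (ip x y)^*.
Hypothesis ipp : forall x, 0 <= ip x x.
Hypothesis ipd : forall x, ip x x = 0 -> x = 0.
Variables (T Tadj D E : V -> V).
Hypothesis hT : linop T.
Hypothesis hadj : forall x y, ip (T x) y = ip x (Tadj y).
Hypothesis hD : linop D.
Hypothesis hDpos : forall x, 0 <= ip (D x) x.
Hypothesis hDD : forall x, D (D x) = Tadj (T x) - x.
Hypothesis hE : linop E.
Hypothesis hEpos : forall x, 0 <= ip (E x) x.
Hypothesis hEE : forall x, E (E x) = Tadj (Tadj (T (T x))) - x.
Hypothesis hreg1 : forall x, Tadj (T (T x)) - T x = D (T (D x)).
Hypothesis hconc : forall x, ip (Tadj (Tadj (T (T x))) - 2%:R *: Tadj (T x) + x) x <= 0.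

Let ipDl := ipDl ipl.
Let ipDr := ipDr ipl ipc.
Let ipZl := ipZl ipl.
Let ipZr := ipZr ipl ipc.
Let ipNl := ipNl ipl.
Let ipNr := ipNr ipl ipc.
Let ipBl := ipBl ipl.
Let ipBr := ipBr ipl ipc.
Let ip0l := ip0l ipl.
Let ip0r := ip0r ipl ipc.
Let hTadj : linop Tadj. Proof. by apply: adj_lin => //; eauto. Qed.
Let hadj' : forall x y, ip (Tadj x) y = ip x (T y). Proof. move=> x y; by rewrite ipc -hadj -ipc. Qed.
Let Dsa : forall x y, ip (D x) y = ip x (D y). Proof. by apply: pos_selfadj. Qed.
Let Esa : forall x y, ip (E x) y = ip x (E y). Proof. by apply: pos_selfadj. Qed.

Lemma DD_ip x y : ip (D x) (D y) = ip (Tadj (T x) - x) y.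
Proof. by rewrite -hDD [RHS]Dsa. Qed.
Lemma EE_ip x y : ip (E x) (E y) = ip (Tadj (Tadj (T (T x))) - x) y.
Proof. by rewrite -hEE [RHS]Esa. Qed.
Lemma nD_T x : ip (D x) (D x) = ip (T x) (T x) - ip x x.
Proof. by rewrite DD_ip ipBl hadj'. Qed.
Lemma reg1 x : D (D (T x)) = D (T (D x)).
Proof. by rewrite hDD hreg1. Qed.
Lemma EE_split x : E (E x) = D (D x) + Tadj (D (D (T x))).
Proof.
rewrite hEE !hDD (linB hTadj).
by rewrite [RHS]addrC addrA subrK.
Qed.
Lemma nE_split x : ip (E x) (E x) = ip (D x) (D x) + ip (D (T x)) (D (T x)).
Proof.
rewrite (Esa x (E x)) EE_split ipDr -(Dsa x (D x)) -hadj.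
by rewrite -(Dsa (T x) (D (T x))).
Qed.
Lemma conc x : ip (D (T x)) (D (T x)) <= ip (D x) (D x).
Proof.
rewrite -subr_le0 !nD_T.
have := hconc x.
rewrite ipDl ipBl ipZl !hadj'.
move=> h; apply: (le_trans _ h); rewrite le_eqVlt; apply/orP; left; apply/eqP.
ring.
Qed.

Definition perp v := forall k, D k = 0 -> ip v k = 0.

Lemma ip_eq0_ge (a : R[i]) : 0 <= a -> a <= 0 -> a = 0.
Proof. by move=> h1 h2; apply: le_anti; rewrite h1 h2. Qed.

Lemma DD0 z : D (D z) = 0 -> D z = 0.
Proof. by move=> h; apply: ipd; rewrite Dsa h ip0r. Qed.
Lemma TK k : D k = 0 -> D (T k) = 0.
Proof.
move=> hk; apply: ipd; apply: ip_eq0_ge => //.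
by have := conc k; rewrite hk ip0l.
Qed.
Lemma EK k : D k = 0 -> E k = 0.
Proof. by move=> hk; apply: ipd; rewrite nE_split (TK _ hk) hk ip0l addr0. Qed.
Lemma KE k : E k = 0 -> D k = 0.
Proof.
move=> hk; apply: ipd; apply: ip_eq0_ge => //.
have := nE_split k; rewrite hk ip0l => h.
have -> : ip (D k) (D k) = - ip (D (T k)) (D (T k)) by apply/eqP; rewrite -addr_eq0 -h.
by rewrite oppr_le0.
Qed.
Lemma perpD x : perp (D x).
Proof. by move=> k hk; rewrite Dsa hk ip0r. Qed.
Lemma perpE x : perp (E x).
Proof. by move=> k hk; rewrite Esa (EK _ hk) ip0r. Qed.
Lemma perpTadj v : perp v -> perp (Tadj v).
Proof. by move=> hv k hk; rewrite hadj' hv // TK. Qed.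
Lemma perp_lin a u v : perp u -> perp v -> perp (a *: u + v).
Proof. by move=> hu hv k hk; rewrite ipl hu // hv // mulr0 addr0. Qed.
Lemma perp_K0 v : perp v -> D v = 0 -> v = 0.
Proof. by move=> hv hk; apply: ipd; apply: hv. Qed.
Lemma ipff_neq0 f : f != 0 -> ip f f != 0.
Proof. by apply: contraNneq => /ipd ->. Qed.

Lemma rank1_reg :
  (exists e : V, [/\ e != 0, (forall x, exists c : R[i], Tadj (T x) - x = c *: e)
                  & exists x, Tadj (T x) - x != 0]) ->
  forall x, Tadj (Tadj (T (T (T x)))) - T x = E (T (E x)).
Proof.
case=> e [e0 hc [x0 hx0]].
have [c0 hc0] := hc x0.
set f := Tadj (T x0) - x0 in hx0 hc0 *.
have fD : f = D (D x0) by rewrite /f hDD.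
have pf : perp f by rewrite fD; apply: perpD.
have c00 : c0 != 0 by apply: contraNneq hx0 => c0z; by rewrite hc0 c0z scale0r.
have pf0 : ip f f != 0 by apply: ipff_neq0.
clearbody f.
have DDlin y t : D (D (y - t *: f)) = D (D y) - t *: D (D f).
  by rewrite !(linB hD) !(linZ hD).
have decomp y : exists t, D (y - t *: f) = 0.
  have [cy hcy] := hc y; have [cf hcf] := hc f.
  have cf0 : cf != 0.
    apply: contraNneq hx0 => cfz.
    apply/eqP/(perp_K0 _) => //; apply: (DD0 _); by rewrite hDD hcf cfz scale0r.
  exists (cy / cf); apply: (DD0 _); rewrite DDlin !hDD hcy hcf scalerA.
  by rewrite mulfVK // subrr.
have span v : perp v -> v = (ip v f / ip f f) *: f.
  move=> hv; have [t ht] := decomp v.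
  set s := ip v f / ip f f.
  apply/eqP; rewrite -subr_eq0; apply/eqP; apply: ipd.
  set w := v - s *: f.
  have wf : ip w f = 0 by rewrite /w ipBl ipZl /s mulfVK // subrr.
  have pw : perp w.
    have -> : w = (- s) *: f + v by rewrite /w scaleNr addrC.
    exact: perp_lin.
  have ew : w = (t - s) *: f + (v - t *: f).
    by rewrite /w scalerBl [RHS]addrC [RHS]addrA subrK.
  by rewrite {2}ew ipDr ipZr wf mulr0 add0r pw.
set pff := ip f f.
set beta := ip (E f) f / pff.
have Ef : E f = beta *: f by apply: (span _); apply: perpE.
have breal : beta^* = beta.
  rewrite /beta rmorphM fmorphV; congr (_ * _^-1).
    by apply/CrealP/ger0_real/hEpos.
  by apply/CrealP/ger0_real/ipp.
set mu := ip (Tadj f) f / pff.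
have Tf : Tadj f = mu *: f by apply: (span _); apply: perpTadj.
move=> x.
have -> : Tadj (Tadj (T (T (T x)))) - T x = E (E (T x)) by rewrite hEE.
rewrite [E (T x)](span _); last by apply: perpE.
rewrite (linZ hE) Ef scalerA.
rewrite [E (T (E x))](span _); last by apply: perpE.
congr (_ *: _).
rewrite !Esa Ef !ipZr breal !hadj Tf !ipZr (Esa x f) Ef ipZr breal.
by move: (mu^*) (ip x f) ((ip f f)^-1) => a b c; ring.
Qed.

Hypothesis ipcomp : forall u : nat -> V,
         (forall e : R[i], 0 < e -> exists N, forall m n, (N <= m)%N -> (N <= n)%N ->
            ip (u m - u n) (u m - u n) < e) ->
         exists l : V, forall e : R[i], 0 < e -> exists N, forall n, (N <= n)%N ->
            ip (u n - l) (u n - l) < e.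
Hypothesis hDb : exists M : R[i], forall x, ip (D x) (D x) <= M * ip x x.
Hypothesis hreg2 : forall x, Tadj (Tadj (T (T (T x)))) - T x = E (T (E x)).

Lemma Kcl (u : nat -> V) l : (forall n, D (u n) = 0) ->
  (forall e : R[i], 0 < e -> exists N, forall n, (N <= n)%N -> ip (u n - l) (u n - l) < e) ->
  D l = 0.
Proof.
move=> hu hl; case: hDb => M hM.
apply: ipd; set c := ip (D l) (D l).
have c0 : 0 <= c by apply: ipp.
case: (eqVneq c 0) => // cn0.
have cp : 0 < c by rewrite lt_def cn0 c0.
have Mp : 0 < `|M| + 1 by apply: ltr_wpDl; [exact: normr_ge0 | exact: ltr01].
have ep : 0 < c / (`|M| + 1) by apply: divr_gt0.
have [N hN] := hl _ ep; have h := hN N (leqnn N).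
set p := ip (u N - l) (u N - l) in h.
have p0 : 0 <= p by apply: ipp.
have hc : c <= M * p.
  have -> : c = ip (D (l - u N)) (D (l - u N)) by rewrite (linB hD) hu subr0.
  have -> : p = ip (l - u N) (l - u N).
    by rewrite /p -opprB ipNl ipNr opprK.
  exact: hM.
have Mpr : M * p \is Num.real.
  by apply: ger0_real; apply: le_trans hc.
have h1 : M * p <= `|M| * p.
  by rewrite -[X in _ <= _ * X](ger0_norm p0) -normrM; exact: real_ler_norm.
have h2 : `|M| * p <= (`|M| + 1) * p by rewrite ler_wpM2r // lerDl ler01.
have h3 : (`|M| + 1) * p < (`|M| + 1) * (c / (`|M| + 1)) by rewrite ltr_pM2l.
have : c < c.
  apply: le_lt_trans hc _; apply: le_lt_trans h1 _; apply: le_lt_trans h2 _.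
  by apply: lt_le_trans h3 _; rewrite mulrC divfK // gt_eqF.
by rewrite ltxx.
Qed.


Lemma lin_comp (f g : V -> V) : linop f -> linop g -> linop (fun x => f (g x)).
Proof. by move=> hf hg a x y; rewrite hg hf. Qed.
Lemma lin_iter (f : V -> V) k : linop f -> linop (iter k f).
Proof.
move=> hf; elim: k => [|k IH] a x y //=.
by rewrite IH hf.
Qed.
Lemma perpB u v : perp u -> perp v -> perp (u - v).
Proof. by move=> hu hv; rewrite -scaleN1r addrC; apply: perp_lin. Qed.

Section WithProj.
Variable Pk : V -> V.
Hypothesis hPk : forall x, D (Pk x) = 0 /\ forall k, D k = 0 -> ip (x - Pk x) k = 0.

Definition Q x := x - Pk x.
Definition Cm x := Q (T (Q x)).
Definition Cs x := Q (Tadj (Q x)).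
Definition G x := Cs (Cm x).

Lemma perpQ x : perp (Q x).
Proof. by move=> k hk; case: (hPk x) => _ h; apply: h. Qed.
Lemma DQ x : D (Q x) = D x.
Proof. by rewrite /Q (linB hD); case: (hPk x) => -> _; rewrite subr0. Qed.
Lemma EQ x : E (Q x) = E x.
Proof. by rewrite /Q (linB hE); case: (hPk x) => h _; rewrite (EK _ h) subr0. Qed.
Lemma Qperp v : perp v -> Q v = v.
Proof.
move=> hv.
have P0 : Pk v = 0.
  apply: ipd; case: (hPk v) => hk _.
  have e : Pk v = v - Q v by rewrite /Q opprB addrC subrK.
  by rewrite {1}e ipBl hv // perpQ // subrr.
by rewrite /Q P0 subr0.
Qed.
Lemma QK k : D k = 0 -> Q k = 0.
Proof. by move=> hk; apply: (perp_K0 _ (perpQ k)); rewrite DQ. Qed.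
Lemma Qlin : linop Q.
Proof.
move=> a x y; apply/eqP; rewrite -subr_eq0; apply/eqP.
apply: (perp_K0 _).
  by apply: perpB; [apply: perpQ | apply: perp_lin; apply: perpQ].
by rewrite (linB hD) hD !DQ hD subrr.
Qed.
Lemma Qsa x y : ip (Q x) y = ip x (Q y).
Proof.
have ex : x = Q x + Pk x by rewrite /Q subrK.
have ey : y = Q y + Pk y by rewrite /Q subrK.
rewrite {1}ey {2}ex ipDr ipDl.
case: (hPk x) => hx _; case: (hPk y) => hy _.
rewrite (perpQ x _ hy) addr0 (ipc (Q y) (Pk x)) (perpQ y _ hx) conjC0 addr0.
by [].
Qed.
Lemma perpCm x : perp (Cm x). Proof. exact: perpQ. Qed.
Lemma perpCs x : perp (Cs x). Proof. exact: perpQ. Qed.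
Lemma perpG x : perp (G x). Proof. exact: perpQ. Qed.
Lemma Cmlin : linop Cm.
Proof. by apply: lin_comp; [exact: Qlin | apply: lin_comp; [exact: hT | exact: Qlin]]. Qed.
Lemma Cslin : linop Cs.
Proof. by apply: lin_comp; [exact: Qlin | apply: lin_comp; [exact: hTadj | exact: Qlin]]. Qed.
Lemma Glin : linop G.
Proof. by apply: lin_comp; [exact: Cslin | exact: Cmlin]. Qed.
Lemma Cm_adj x y : ip (Cm x) y = ip x (Cs y).
Proof. by rewrite /Cm /Cs Qsa hadj Qsa. Qed.
Lemma Cs_adj x y : ip (Cs x) y = ip x (Cm y).
Proof. by rewrite ipc -Cm_adj -ipc. Qed.
Lemma DT_C x : D (T x) = Cm (D x).
Proof.
have hk : D (D (T x) - T (D x)) = 0 by rewrite (linB hD) reg1 subrr.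
have := QK _ hk; rewrite (linB Qlin) => /eqP; rewrite subr_eq0 => /eqP.
by rewrite /Cm (Qperp _ (perpD (T x))) (Qperp _ (perpD x)) => ->.
Qed.
Lemma ET_C x : E (T x) = Cm (E x).
Proof.
have hk : D (E (T x) - T (E x)) = 0.
  apply: (KE _); by rewrite (linB hE) hEE hreg2 subrr.
have := QK _ hk; rewrite (linB Qlin) => /eqP; rewrite subr_eq0 => /eqP.
by rewrite /Cm (Qperp _ (perpE (T x))) (Qperp _ (perpE x)) => ->.
Qed.
Lemma DC x : D (Cm x) = Cm (D x).
Proof. by rewrite /Cm DQ DT_C DQ. Qed.
Lemma EC x : E (Cm x) = Cm (E x).
Proof. by rewrite /Cm EQ ET_C EQ. Qed.
Lemma DCs x : D (Cs x) = Cs (D x).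
Proof.
apply: (ip_ext ipl ipd) => y.
by rewrite Dsa Cs_adj -DC -Dsa Cs_adj.
Qed.
Lemma DG x : D (G x) = G (D x).
Proof. by rewrite /G DCs DC. Qed.
Lemma Gsa x y : ip (G x) y = ip x (G y).
Proof. by rewrite /G Cs_adj Cm_adj. Qed.
Lemma CCip x y : ip (Cm x) (Cm y) = ip (G x) y.
Proof. by rewrite /G Cs_adj. Qed.
Lemma EE_G x : E (E x) = D (D (x + G x)).
Proof.
rewrite EE_split (linD hD) (linD hD); congr (_ + _).
apply: (ip_ext ipl ipd) => y.
by rewrite hadj' (Dsa (D (T x))) !DT_C CCip -DG [RHS]Dsa.
Qed.
Lemma GC x : G (Cm x) = Cm (G x).
Proof.
apply/eqP; rewrite -subr_eq0; apply/eqP.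
apply: (perp_K0 _); first by apply: perpB; [apply: perpG | apply: perpCm].
apply: (DD0 _).
have h1 : E (E (Cm x)) = D (D (Cm x + G (Cm x))) by rewrite EE_G.
have h2 : E (E (Cm x)) = D (D (Cm x + Cm (G x))).
  by rewrite !EC EE_G -!DC (linD Cmlin).
have : D (D (Cm x + G (Cm x))) - D (D (Cm x + Cm (G x))) = 0 by rewrite -h1 -h2 subrr.
by rewrite -!(linB hD) opprD addrA [Cm x + _]addrC addrK.
Qed.
Lemma DTk k x : D (iter k T x) = iter k Cm (D x).
Proof. by elim: k => [|k IH] //=; rewrite DT_C IH. Qed.
Lemma Giter k u : G (iter k Cm u) = iter k Cm (G u).
Proof. by elim: k => [|k IH] //=; rewrite GC IH. Qed.
Lemma Cip k u v : ip (iter k Cm u) (iter k Cm v) = ip (iter k G u) v.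
Proof.
elim: k u v => [|k IH] u v //=.
by rewrite CCip Giter IH -iterSr.
Qed.

Definition gg k u := ip (iter k G u) u.
Definition ff m u := \sum_(k < m.+1) ((-1) ^+ k * ('C(m, k))%:R) * gg k u.

Lemma gGu k u : gg k (u - G u) = gg k u - 2%:R * gg k.+1 u + gg k.+2 u.
Proof.
rewrite /gg (linB (lin_iter _ k Glin)) -iterSr ipBl !(ipBr u (G u)).
rewrite -!Gsa -!iterS.
by move: (ip (iter k G u) u) (ip (iter k.+1 G u) u) (ip (iter k.+2 G u) u) => a b c; ring.
Qed.

Lemma ff_step m u : ff m.+2 u = ff m (u - G u).
Proof.
rewrite /ff (pascal (fun k => gg k u)) (pascal (fun k => gg k u - gg k.+1 u)); apply: eq_bigr => k _; congr (_ * _).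
rewrite gGu; ring.
Qed.

Lemma ff_pos m x : 0 <= ff m (D x).
Proof.
suff : (forall x, 0 <= ff m (D x)) /\ (forall x, 0 <= ff m.+1 (D x)) by case=> h _; apply: h.
elim: m => [|m [IH1 IH2]].
  split=> y.
    by rewrite /ff big_ord1 expr0 mul1r bin0 mul1r /gg /=.
  rewrite /ff (pascal (fun k => gg k (D y)) 0) big_ord1 expr0 mul1r bin0 mul1r /gg /=.
  by rewrite -CCip -DT_C subr_ge0 conc.
split=> // y.
by rewrite ff_step -DG -(linB hD) IH1.
Qed.

Lemma che n : (1 <= n)%N -> forall x,
  ip (\sum_(j < n.+1) (((-1) ^+ j * ('C(n, j))%:R) : R[i]) *: iter j Tadj (iter j T x)) x <= 0.
Proof.
case: n => // m _ x.
have ipsum (N : nat) (F : 'I_N -> V) :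
    ip (\sum_(j < N) F j) x = \sum_(j < N) ip (F j) x.
  apply: (big_rec2 (fun a b => ip a x = b)); first exact: ip0l.
  by move=> j y1 y2 _ <-; rewrite ipDl.
have adj_it j y z : ip (iter j Tadj y) z = ip y (iter j T z).
  by elim: j y z => [|j IH] y z //=; rewrite hadj' IH -iterSr.
rewrite ipsum.
under eq_bigr => j _ do rewrite ipZl adj_it.
rewrite (pascal (fun j => ip (iter j T x) (iter j T x)) m).
under eq_bigr => k _ do rewrite /= -[ip (T (iter k T x)) _]/(ip (iter k.+1 T x) (iter k.+1 T x)) -opprB -nD_T DTk Cip mulrN.
rewrite sumrN oppr_le0.
exact: ff_pos.
Qed.
End WithProj.
End Main.


Theorem corollary4p3 (R : realType) (V : lmodType R[i]) (ip : V -> V -> R[i])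
  (T Tadj S1 S2 : V -> V) :
  is_hilbert ip ->
  bounded_op ip T ->
  is_adjoint ip T Tadj ->
  (* S1 = Delta_T^{1/2},  S2 = Delta_{T^2}^{1/2}  (T^2 has adjoint Tadj^2) *)
  is_sqrt ip (Delta T Tadj) S1 ->
  is_sqrt ip (Delta (T \o T) (Tadj \o Tadj)) S2 ->
  regular (Delta T Tadj) S1 T ->
  concave ip T Tadj ->
  (regular (Delta (T \o T) (Tadj \o Tadj)) S2 T -> compl_hyperexpansive ip T Tadj) /\
  (rank_one (Delta T Tadj) -> regular (Delta (T \o T) (Tadj \o Tadj)) S2 T).
Proof.
move=> [ipl ipc ipp ipd ipcomp] [hT _] hadj [[hD hDb] hDpos hDD] [[hE _] hEpos hEE] hreg1 hconc.
have hDD' : forall x, S1 (S1 x) = Tadj (T x) - x by exact: hDD.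
have hEE' : forall x, S2 (S2 x) = Tadj (Tadj (T (T x))) - x by exact: hEE.
have hreg1' : forall x, Tadj (T (T x)) - T x = S1 (T (S1 x)) by exact: hreg1.
have hconc' : forall x, ip (Tadj (Tadj (T (T x))) - 2%:R *: Tadj (T x) + x) x <= 0 by exact: hconc.
split.
  move=> hreg2.
  have hreg2' : forall x, Tadj (Tadj (T (T (T x)))) - T x = S2 (T (S2 x)) by exact: hreg2.
  have hproj : forall x, exists k, S1 k = 0 /\ forall k', S1 k' = 0 -> ip (x - k) k' = 0.
    move=> x; apply: (proj_exists ipl ipc ipp ipcomp (K := fun k => S1 k = 0)).
    - exact: (lin0 hD).
    - by move=> y z hy hz /=; rewrite (linD hD) hy hz addr0.
    - by move=> a y hy /=; rewrite (linZ hD) hy scaler0.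
    - move=> u l hu hl.
      by eapply Kcl; eauto.
  have [Pk hPk] := choice hproj.
  move=> n hn x.
  exact: (che _ _ _ ipl ipc ipp ipd T Tadj S1 S2 hT hadj hD hDpos hDD' hE hEpos hEE' hreg1' hconc' hreg2' Pk hPk n hn x).
move=> h1 x.
eapply (rank1_reg _ _ _ ipl ipc ipp ipd T Tadj S1 S2); eassumption.
Qed.
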